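(* Let $\lambda=(\lambda_1,\dots,\lambda_I)$, $\mu=(\mu_1,\dots,\mu_J)$ be partitions of $n$ and $(T_t)_{t\ge0}$ the random transpositions Markov chain on $\mathcal{T}_{\lambda,\mu}$ with transition matrix $P$. For every positive integer $m$, every cell $(i,j)$ and every $\mathbf{x}\in\mathcal{T}_{\lambda,\mu}$, \[ \mathbb{E}[T_{t+1}(i,j)^m\mid T_t=\mathbf{x}]=x_{ij}^m\left(1-\frac{2m(n+1-m)}{n^2}\right)+(\text{a polynomial in the entries of }\mathbf{x}\text{ of degree}<m). \] Consequently, the eigenfunctions of $P$ are polynomials in the table entries.
   Context: $\mathcal{T}_{\lambda,\mu}$ is the set of $I\times J$ nonnegative integer tables with row sums $\lambda_i$ and column sums $\mu_j$; $T_t(i,j)$ is the $(i,j)$ entry at time $t$. The random transpositions chain: for $T'$ obtained from $T$ by subtracting $1$ at cells $(i_1,j_1),(i_2,j_2)$ and adding $1$ at $(i_1,j_2),(i_2,j_1)$ (with $i_1\ne i_2$, $j_1\ne j_2$), $P(T,T')=2T_{i_1j_1}T_{i_2j_2}/n^2$; $P(T,T)$ is the remaining mass. Its stationary distribution is the Fisher–Yates distribution $\pi_{\lambda,\mu}(T)=\frac1{n!}\prod_{i,j}\frac{\lambda_i!\mu_j!}{T_{ij}!}$. *)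

(* Defs.v *)
From HB Require Import structures.
From mathcomp Require Import all_boot all_order all_algebra.
From mathcomp Require Export mpoly.
Set Implicit Arguments. Unset Strict Implicit. Unset Printing Implicit Defensive.
Import Order.TTheory GRing.Theory Num.Theory.
Local Open Scope ring_scope.

Definition is_partition (n : nat) (lam : seq nat) : bool :=
  [&& sorted geq lam, all (fun k => 0 < k)%N lam & sumn lam == n].

Notation cell lam mu := ('I_(size lam) * 'I_(size mu))%type.

(* Tables with entries in {0,..,n} (every table of T_{lam,mu} has entries <= n). *)
Definition table (n : nat) (lam mu : seq nat) := {ffun cell lam mu -> 'I_n.+1}.

Definition tables (n : nat) (lam mu : seq nat) : {set table n lam mu} :=
  [set T : table n lam mu |
     [forall i : 'I_(size lam), (\sum_(j : 'I_(size mu)) (T (i, j) : nat))%N == nth 0%N lam i]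
  && [forall j : 'I_(size mu), (\sum_(i : 'I_(size lam)) (T (i, j) : nat))%N == nth 0%N mu j]].

(* T' is obtained from T by subtracting 1 at (i1,j1),(i2,j2) and adding 1 at
   (i1,j2),(i2,j1) (stated without truncated subtraction). *)
Definition is_move n lam mu (T T' : table n lam mu)
    (i1 i2 : 'I_(size lam)) (j1 j2 : 'I_(size mu)) : bool :=
  [forall c : cell lam mu,
     ((T' c : nat) + ((c == (i1, j1)) : nat) + ((c == (i2, j2)) : nat)
      == (T c : nat) + ((c == (i1, j2)) : nat) + ((c == (i2, j1)) : nat))%N].

Section Chain.
Variable R : realFieldType.

(* The unordered pair of cells
   {(i1,j1),(i2,j2)} (with i1 <> i2, j1 <> j2) is enumerated exactly once by
   requiring i1 < i2; distinct such pairs give distinct T', so at most one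
   term of the sum is nonzero, and it equals 2 T_{i1j1} T_{i2j2} / n^2. *)
Definition Poff n lam mu (T T' : table n lam mu) : R :=
  \sum_(i1 : 'I_(size lam)) \sum_(i2 : 'I_(size lam)) \sum_(j1 : 'I_(size mu)) \sum_(j2 : 'I_(size mu))
    if [&& (i1 < i2)%N, j1 != j2 & is_move T T' i1 i2 j1 j2]
    then 2 * (T (i1, j1) : nat)%:R * (T (i2, j2) : nat)%:R / (n%:R ^+ 2)
    else 0.

Definition Ptrans n lam mu (T T' : table n lam mu) : R :=
  if T' == T then 1 - \sum_(U in tables n lam mu | U != T) Poff T U
  else Poff T T'.

(* (P f)(x) = E[f(T_{t+1}) | T_t = x]. *)
Definition Papply n lam mu (f : table n lam mu -> R) (x : table n lam mu) : R :=
  \sum_(T' in tables n lam mu) Ptrans x T' * f T'.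

(* Variables of the polynomial ring: one per cell, indexed via enum_rank. *)
Definition nvars (lam mu : seq nat) := #|{: cell lam mu}|.

Definition entries n lam mu (x : table n lam mu) : 'I_(nvars lam mu) -> R :=
  fun k => (x (enum_val k) : nat)%:R.

End Chain.

Arguments Poff {R n lam mu} T T'.
Arguments Ptrans {R n lam mu} T T'.
Arguments Papply {R n lam mu} f x.
Arguments entries {R n lam mu} x k.

(* Main.v *)
Require Import Defs.
From HB Require Import structures.
From mathcomp Require Import all_boot all_order all_algebra.
From mathcomp Require Import mpoly.
From mathcomp Require Import ring lra zify.
Import Order.TTheory GRing.Theory Num.Theory.
Set Implicit Arguments. Unset Strict Implicit. Unset Printing Implicit Defensive.
Local Open Scope ring_scope.
Lemma coef_XC_exp (R : comNzRingType) (c : R) (m j : nat) :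
  (('X + c%:P) ^+ m)`_j = c ^+ (m - j) *+ 'C(m, j).
Proof.
rewrite addrC exprDn coef_sum.
have [jm|jm] := ltnP j m.+1.
  rewrite (bigD1 (Ordinal jm)) //= big1 ?addr0.
    by rewrite coefMn -polyC_exp coefCM coefXn eqxx mulr1.
  move=> i /eqP ne; rewrite coefMn -polyC_exp coefCM coefXn.
  case: eqP => [E|]; last by rewrite mulr0 mul0rn.
  by exfalso; apply: ne; apply: val_inj; rewrite /= E.
rewrite big1 ?bin_small ?mulr0n //.
move=> i _; rewrite coefMn -polyC_exp coefCM coefXn.
case: eqP => [E|]; last by rewrite mulr0 mul0rn.
by move: (ltn_ord i); rewrite -E ltnNge jm.
Qed.

Lemma coefA (R : comNzRingType) (c : R) (m j : nat) :
  (('X + c%:P) ^+ m - 'X^m)`_j = if (j < m)%N then c ^+ (m - j) *+ 'C(m, j) else 0.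
Proof.
rewrite coefB coef_XC_exp coefXn.
case: ltngtP => [jm|mj|->]; first by rewrite subr0.
  by rewrite bin_small // mulr0n subr0.
by rewrite subnn binn expr0 subrr.
Qed.

Lemma bin2_mul (m : nat) : ('C(m, 2) * 2 = m * m.-1)%N.
Proof.
elim: m => [//|m IH]; rewrite binS bin1 mulnDl IH /=.
by case: m {IH} => [//|m] /=; rewrite mulnS mulSn mulnC; lia.
Qed.

Lemma poly_part (R : comNzRingType) (N k l u : R) (m : nat) : (0 < m)%N ->
  exists p : {poly R}, (size p <= m)%N /\ forall a,
   p.[a] = k * ((l - a) * (u - a) * ((a + 1) ^+ m - a ^+ m)
                + a * (N - l - u + a) * ((a - 1) ^+ m - a ^+ m))
           + k * (m%:R * (N + 1 - m%:R)) * a ^+ m.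
Proof.
move=> m0.
set A : {poly R} := ('X + 1%:P) ^+ m - 'X^m.
set B : {poly R} := ('X + (-1)%:P) ^+ m - 'X^m.
exists (k%:P * ((l*u)%:P * A - (l+u)%:P * ('X * A) + 'X*('X*A)
          + (N-l-u)%:P*('X*B) + 'X*('X*B)) + (k*(m%:R*(N+1-m%:R)))%:P * 'X^m).
split; last first.
  move=> a; rewrite /A /B !(hornerD, hornerM, hornerC, hornerX, hornerN, hornerXn, horner_exp, hornerCM, hornerMX).
  ring.
apply/leq_sizeP => j hj.
rewrite !(coefD, coefN, coefCM, coefXM, coefXn) /A /B !coef_XC_exp.
clear A B.
have hi : forall (c : R) i, (m <= i)%N -> c ^+ (m - i) *+ 'C(m, i) - (i == m)%:R = 0.
  move=> c i; rewrite leq_eqVlt => /orP [/eqP <- | lt]; first by rewrite subnn binn eqxx subrr.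
  by rewrite bin_small // (gtn_eqF lt) subrr.
case: m m0 hi hj => [//|m] _ hi hj.
move: hj; rewrite leq_eqVlt => /orP [/eqP <- | ].
  rewrite /= hi // (ltn_eqF (ltnSn m)) subSnn binSn !expr1 !subr0 mulr0 add0r eqxx mulr1.
  case: m hi => [|m] hi /=.
    rewrite !addr0; ring.
  have e1 : (m == m.+2) = false by apply: ltn_eqF; rewrite ltnS leqW.
  rewrite e1 subr0.
  have -> : (m.+2 - m = 2)%N by rewrite -addn2 addKn.
  have e : 'C(m.+2, 2) = 'C(m.+2, m) by rewrite -bin_sub // !subSS subn0.
  have hb : ('C(m.+2, m) * 2 = m.+2 * m.+1)%N by rewrite -e bin2_mul.
  have hb' : ('C(m.+2, m))%:R * 2 = (m.+2)%:R * (m.+1)%:R :> R by rewrite -[RHS]natrM -hb natrM.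
  rewrite sqrrN expr1n subr0 mulNrn.
  set C := 'C(m.+2, m)%:R in hb' *.
  transitivity (k * (C * 2 - m.+2%:R * m.+1%:R) + k * m.+2%:R * (m.+1%:R + 1 - m.+2%:R)).
    ring.
  by rewrite hb' natr1 !subrr !mulr0 addr0.
case: j => [//|j] hj /=.
case: j hj => [|j] hj; first by rewrite ltnS ltn0 in hj.
rewrite !ltnS in hj.
have e2 : (j.+2 == m.+1) = false by rewrite eqSS; apply: gtn_eqF; rewrite ltnS.
rewrite /= !(hi _ j.+2) ?(hi _ j.+1) ?ltnS ?(leqW hj) // e2 !mulr0 !addr0 !add0r.
move: hj; rewrite leq_eqVlt => /orP [/eqP <- | hj]; last by rewrite !(hi _ j) // oppr0 !addr0 mulr0.
rewrite subSnn binSn !expr1 (ltn_eqF (ltnSn m)) !subr0 mulNrn oppr0 add0r addrN mulr0 //.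
Qed.

Lemma poly_to_mpoly (R : comNzRingType) (nv : nat) (k : 'I_nv) (p : {poly R}) (m : nat) :
  (size p <= m)%N ->
  exists q : {mpoly R[nv]}, (msize q <= m)%N /\ forall v, q.@[v] = p.[v k].
Proof.
move=> hs; exists (\sum_(i < m) p`_i *: 'X_k ^+ i); split.
  apply: leq_trans (msize_sum _ _ _) _.
  apply/bigmax_leqP => i _.
  apply: leq_trans (msizeZ_le _ _) _.
  by rewrite mpolyXn msizeX mdegMn mdeg1 mul1n.
move=> v; rewrite (horner_coef_wide _ hs) raddf_sum /=.
apply: eq_bigr => i _; by rewrite mevalZ rmorphXn /= mevalXU.
Qed.

Lemma sum_ind_row (a b : nat) (r r0 : 'I_a) (c : 'I_b) :
  (\sum_(j : 'I_b) (((r, j) == (r0, c)) : nat))%N = (r == r0).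
Proof.
rewrite (bigD1 c) //= big1 ?addn0; first by rewrite xpair_eqE eqxx andbT.
by move=> j /negbTE jc; rewrite xpair_eqE jc andbF.
Qed.

Lemma sum_ind_col (a b : nat) (s : 'I_b) (r0 : 'I_a) (c : 'I_b) :
  (\sum_(i : 'I_a) (((i, s) == (r0, c)) : nat))%N = (s == c).
Proof.
rewrite (bigD1 r0) //= big1 ?addn0; first by rewrite xpair_eqE eqxx.
by move=> j /negbTE jc; rewrite xpair_eqE jc.
Qed.

Lemma move_val n lam mu (T U : table n lam mu) i1 i2 j1 j2 c :
  is_move T U i1 i2 j1 j2 ->
  (U c : nat) = ((T c : nat) + (c == (i1, j2)) + (c == (i2, j1)) - (c == (i1, j1)) - (c == (i2, j2)))%N.
Proof.
by move=> /forallP /(_ c) /eqP <-; rewrite subnAC !addnK.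
Qed.

Lemma move_uniq n lam mu (T U V : table n lam mu) i1 i2 j1 j2 :
  is_move T U i1 i2 j1 j2 -> is_move T V i1 i2 j1 j2 -> U = V.
Proof.
move=> hU hV; apply/ffunP => c; apply: ord_inj.
by rewrite (move_val c hU) (move_val c hV).
Qed.

Lemma move_tables n lam mu (T U : table n lam mu) i1 i2 j1 j2 :
  T \in tables n lam mu -> is_move T U i1 i2 j1 j2 -> U \in tables n lam mu.
Proof.
rewrite !inE => /andP [/forallP hr /forallP hc] /forallP hm.
apply/andP; split; apply/forallP.
  move=> r; rewrite -(eqP (hr r)).
  have S : (\sum_j (U (r,j) + ((r,j)==(i1,j1)) + ((r,j)==(i2,j2))))%N
         = (\sum_j (T (r,j) + ((r,j)==(i1,j2)) + ((r,j)==(i2,j1))))%N.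
    by apply: eq_bigr => j _; exact/eqP/hm.
  by move: S; rewrite !big_split /= !sum_ind_row => /eqP; rewrite !eqn_add2r.
move=> s; rewrite -(eqP (hc s)).
have S : (\sum_i (U (i,s) + ((i,s)==(i1,j1)) + ((i,s)==(i2,j2))))%N
       = (\sum_i (T (i,s) + ((i,s)==(i1,j2)) + ((i,s)==(i2,j1))))%N.
  by apply: eq_bigr => j _; exact/eqP/hm.
by move: S; rewrite !big_split /= !sum_ind_col [in RHS]addnAC => /eqP; rewrite !eqn_add2r.
Qed.

Definition mvt n lam mu (x : table n lam mu) i1 i2 j1 j2 : table n lam mu :=
  [ffun c => inord ((x c : nat) + (c == (i1, j2)) + (c == (i2, j1)) - (c == (i1, j1)) - (c == (i2, j2)))%N].

Lemma nth_le_sumn (s : seq nat) k : (nth 0 s k <= sumn s)%N.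
Proof.
elim: s k => [|a s IH] [|k] //=; first exact: leq_addr.
exact: leq_trans (IH k) (leq_addl _ _).
Qed.

Lemma row_two n lam mu (x : table n lam mu) r j1 j2 :
  x \in tables n lam mu -> j1 != j2 ->
  ((x (r, j1) : nat) + x (r, j2) <= nth 0 lam r)%N.
Proof.
rewrite inE => /andP [/forallP /(_ r) /eqP <- _] j12.
rewrite (bigD1 j1) //= (bigD1 j2) /=; last by rewrite eq_sym.
by rewrite addnA leq_addr.
Qed.

Lemma arith4 (X n : nat) (a b c d : bool) : (X <= n)%N -> (a -> 0 < X)%N -> (b -> 0 < X)%N ->
  (c -> X < n)%N -> (d -> X < n)%N -> ~~ (a && b) -> ~~ (c && d) -> ~~ (a && c) ->
  ~~ (a && d) -> ~~ (b && c) -> ~~ (b && d) ->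
  (X + c + d - a - b <= n)%N /\ (X + c + d - a - b + a + b = X + c + d)%N.
Proof.
by case: a b c d => [] [] [] [] //= h1 h2 h3 h4 h5; split; lia.
Qed.

Lemma mvt_move n lam mu (x : table n lam mu) i1 i2 j1 j2 :
  is_partition n lam -> x \in tables n lam mu -> i1 != i2 -> j1 != j2 ->
  (0 < x (i1, j1))%N -> (0 < x (i2, j2))%N ->
  is_move x (mvt x i1 i2 j1 j2) i1 i2 j1 j2.
Proof.
move=> /and3P [_ _ /eqP hn] xT i12 j12 p1 p2.
have lamn : forall r : 'I_(size lam), (nth 0 lam r <= n)%N by move=> r; rewrite -hn nth_le_sumn.
have ex : forall p q c : cell lam mu, p != q -> ~~ ((c == p) && (c == q)).
  by move=> p q c pq; apply/negP => /andP [/eqP -> /eqP E]; rewrite E eqxx in pq.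
have i21 : i2 != i1 by rewrite eq_sym.
have j21 : j2 != j1 by rewrite eq_sym.
apply/forallP => c; rewrite ffunE.
have [] := @arith4 (x c) n (c == (i1, j1)) (c == (i2, j2)) (c == (i1, j2)) (c == (i2, j1)).
- by rewrite -ltnS.
- by move/eqP ->.
- by move/eqP ->.
- move/eqP ->; apply: (leq_trans _ (lamn i1)); apply: leq_trans (row_two i1 xT j12); by rewrite -[X in (X < _)%N]add0n ltn_add2r.
- move/eqP ->; apply: (leq_trans _ (lamn i2)); apply: leq_trans (row_two i2 xT j21); by rewrite -[X in (X < _)%N]add0n ltn_add2r.
- by apply: ex; rewrite xpair_eqE negb_and i12.
- by apply: ex; rewrite xpair_eqE negb_and i12.
- by apply: ex; rewrite xpair_eqE negb_and j12 orbT.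
- by apply: ex; rewrite xpair_eqE negb_and i12.
- by apply: ex; rewrite xpair_eqE negb_and i21.
- by apply: ex; rewrite xpair_eqE negb_and j21 orbT.
move=> hle heq; rewrite inordK ?ltnS //.
by rewrite heq.
Qed.

Lemma Papply_expand (R : realFieldType) n lam mu (f : table n lam mu -> R) x :
  is_partition n lam -> x \in tables n lam mu ->
  Papply f x = f x + \sum_(i1 : 'I_(size lam)) \sum_(i2 : 'I_(size lam))
     \sum_(j1 : 'I_(size mu)) \sum_(j2 : 'I_(size mu))
    (if (i1 < i2)%N && (j1 != j2) then
       2 * (x (i1, j1) : nat)%:R * (x (i2, j2) : nat)%:R / (n%:R ^+ 2)
         * (f (mvt x i1 i2 j1 j2) - f x) else 0).
Proof.
move=> hp xT.
rewrite /Papply (bigD1 x) //=.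
rewrite (eq_bigr (fun U => Poff x U * f U)); last first.
  by move=> U /andP [_ hU]; rewrite /Ptrans (negbTE hU).
rewrite /Ptrans eqxx.
set S := \sum_(U in tables n lam mu | U != x) Poff x U.
have -> : \sum_(U in tables n lam mu | U != x) Poff x U * f U
    = S * f x + \sum_(U in tables n lam mu | U != x) Poff x U * (f U - f x).
  rewrite /S mulr_suml -big_split /=; apply: eq_bigr => U _; ring.
set T1 := \sum_(U in _ | _) _ * (_ - _).
transitivity (f x + T1); first by ring.
congr (_ + _); rewrite /T1.
rewrite [X in X = _](_ : _ = \sum_(U in tables n lam mu) Poff x U * (f U - f x)); last first.
  by rewrite [in RHS](bigD1 x) //= subrr mulr0 add0r.
transitivity (\sum_(U in tables n lam mu) \sum_(i1 : 'I_(size lam)) \sum_(i2 : 'I_(size lam))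
     \sum_(j1 : 'I_(size mu)) \sum_(j2 : 'I_(size mu))
     (if [&& (i1 < i2)%N, j1 != j2 & is_move x U i1 i2 j1 j2] then
       2 * (x (i1, j1) : nat)%:R * (x (i2, j2) : nat)%:R / (n%:R ^+ 2) * (f U - f x) else 0)).
  apply: eq_bigr => U _; rewrite /Poff mulr_suml; apply: eq_bigr => i1 _.
  rewrite mulr_suml; apply: eq_bigr => i2 _; rewrite mulr_suml; apply: eq_bigr => j1 _.
  rewrite mulr_suml; apply: eq_bigr => j2 _.
  by case: ifP; rewrite ?mul0r.
rewrite exchange_big; apply: eq_bigr => i1 _; rewrite exchange_big; apply: eq_bigr => i2 _.
rewrite exchange_big; apply: eq_bigr => j1 _; rewrite exchange_big; apply: eq_bigr => j2 _ /=.
case: ifP => [/andP [c1 c2] | hc]; last first.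
  rewrite big1 // => U _; case: ifP => // /and3P [a b _].
  by rewrite a b in hc.
rewrite c1 c2 /=.
have i12 : i1 != i2 by rewrite -val_eqE /= ltn_eqF.
have [z1|p1] := posnP (x (i1, j1)).
  have w0 : 2 * (x (i1, j1) : nat)%:R * (x (i2, j2) : nat)%:R / (n%:R ^+ 2) = 0 :> R.
    by rewrite z1 mulr0 !mul0r.
  by rewrite w0 mul0r; apply: big1 => U _; rewrite mul0r if_same.
have [z2|p2] := posnP (x (i2, j2)).
  have w0 : 2 * (x (i1, j1) : nat)%:R * (x (i2, j2) : nat)%:R / (n%:R ^+ 2) = 0 :> R.
    by rewrite z2 mulr0 !mul0r.
  by rewrite w0 mul0r; apply: big1 => U _; rewrite mul0r if_same.
have hm := mvt_move hp xT i12 c2 p1 p2.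
rewrite (bigD1 (mvt x i1 i2 j1 j2)) /=; last exact: move_tables xT hm.
rewrite hm big1 ?addr0 // => U /andP [_ hU]; case: ifP => // hmU.
by rewrite (move_uniq hmU hm) eqxx in hU.
Qed.

Definition sum4 (R : comNzRingType) (a b : nat) (F : 'I_a -> 'I_a -> 'I_b -> 'I_b -> R) : R :=
  \sum_(i1 : 'I_a) \sum_(i2 : 'I_a) \sum_(j1 : 'I_b) \sum_(j2 : 'I_b) F i1 i2 j1 j2.

Lemma sum4D (R : comNzRingType) a b (F G : 'I_a -> 'I_a -> 'I_b -> 'I_b -> R) :
  sum4 (fun i1 i2 j1 j2 => F i1 i2 j1 j2 + G i1 i2 j1 j2) = sum4 F + sum4 G.
Proof.
rewrite /sum4 -big_split; apply: eq_bigr => i1 _; rewrite -big_split; apply: eq_bigr => i2 _.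
rewrite -big_split; apply: eq_bigr => j1 _; by rewrite -big_split.
Qed.

Lemma sum4Z (R : comNzRingType) a b (c : R) (F : 'I_a -> 'I_a -> 'I_b -> 'I_b -> R) :
  sum4 (fun i1 i2 j1 j2 => c * F i1 i2 j1 j2) = c * sum4 F.
Proof.
rewrite /sum4 mulr_sumr; apply: eq_bigr => i1 _; rewrite mulr_sumr; apply: eq_bigr => i2 _.
rewrite mulr_sumr; apply: eq_bigr => j1 _; by rewrite mulr_sumr.
Qed.

Lemma sum_pick (R : comNzRingType) (T : finType) (k : T) (G : T -> R) :
  (forall t, t != k -> G t = 0) -> \sum_t G t = G k.
Proof. by move=> h; rewrite (bigD1 k) //= big1 ?addr0. Qed.

Lemma sum_except (R : comNzRingType) (T : finType) (k : T) (G : T -> R) :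
  \sum_t (if t != k then G t else 0) = \sum_t G t - G k.
Proof. by rewrite [in RHS](bigD1 k) //= addrAC subrr add0r -big_mkcond. Qed.

Section Q.
Variables (R : comNzRingType) (a b : nat) (X : 'I_a * 'I_b -> R) (i : 'I_a) (j : 'I_b).

Definition Qf (p : 'I_a -> 'I_a -> 'I_b -> 'I_b -> 'I_a * 'I_b) :=
  sum4 (fun i1 i2 j1 j2 => if (i1 < i2)%N && (j1 != j2) then
     X (i1, j1) * X (i2, j2) * ((i, j) == p i1 i2 j1 j2)%:R else 0).

Lemma Q_r : Qf (fun i1 i2 j1 j2 => (i1, j2)) =
  \sum_(i' : 'I_a) \sum_(j' : 'I_b) (if (i < i')%N && (j' != j) then X (i, j') * X (i', j) else 0).
Proof.
rewrite /Qf /sum4 (@sum_pick _ _ i); last first.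
  move=> i1; rewrite eq_sym => /negbTE h; apply: big1 => i2 _; apply: big1 => j1 _; apply: big1 => j2 _.
  by rewrite xpair_eqE h /= mulr0 if_same.
apply: eq_bigr => i2 _; apply: eq_bigr => j1 _; rewrite (@sum_pick _ _ j); last first.
  by move=> j2; rewrite eq_sym => /negbTE h; rewrite xpair_eqE eqxx /= h mulr0 if_same.
by rewrite eqxx mulr1.
Qed.

Lemma Q_s : Qf (fun i1 i2 j1 j2 => (i2, j1)) =
  \sum_(i' : 'I_a) \sum_(j' : 'I_b) (if (i' < i)%N && (j != j') then X (i', j) * X (i, j') else 0).
Proof.
rewrite /Qf /sum4; apply: eq_bigr => i1 _; rewrite (@sum_pick _ _ i); last first.
  move=> i2; rewrite eq_sym => /negbTE h; apply: big1 => j1 _; apply: big1 => j2 _.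
  by rewrite xpair_eqE h /= mulr0 if_same.
rewrite (@sum_pick _ _ j); last first.
  move=> j1; rewrite eq_sym => /negbTE h; apply: big1 => j2 _.
  by rewrite xpair_eqE eqxx /= h mulr0 if_same.
by apply: eq_bigr => j2 _; rewrite eqxx mulr1.
Qed.

Lemma Q_p : Qf (fun i1 i2 j1 j2 => (i1, j1)) =
  \sum_(i' : 'I_a) \sum_(j' : 'I_b) (if (i < i')%N && (j != j') then X (i, j) * X (i', j') else 0).
Proof.
rewrite /Qf /sum4 (@sum_pick _ _ i); last first.
  move=> i1; rewrite eq_sym => /negbTE h; apply: big1 => i2 _; apply: big1 => j1 _; apply: big1 => j2 _.
  by rewrite xpair_eqE h /= mulr0 if_same.
apply: eq_bigr => i2 _; rewrite (@sum_pick _ _ j); last first.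
  move=> j1; rewrite eq_sym => /negbTE h; apply: big1 => j2 _.
  by rewrite xpair_eqE eqxx /= h mulr0 if_same.
by apply: eq_bigr => j2 _; rewrite eqxx mulr1.
Qed.

Lemma Q_q : Qf (fun i1 i2 j1 j2 => (i2, j2)) =
  \sum_(i' : 'I_a) \sum_(j' : 'I_b) (if (i' < i)%N && (j' != j) then X (i', j') * X (i, j) else 0).
Proof.
rewrite /Qf /sum4; apply: eq_bigr => i1 _; rewrite (@sum_pick _ _ i); last first.
  move=> i2; rewrite eq_sym => /negbTE h; apply: big1 => j1 _; apply: big1 => j2 _.
  by rewrite xpair_eqE h /= mulr0 if_same.
apply: eq_bigr => j1 _; rewrite (@sum_pick _ _ j); last first.
  by move=> j2; rewrite eq_sym => /negbTE h; rewrite xpair_eqE eqxx /= h mulr0 if_same.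
by rewrite eqxx mulr1.
Qed.

Lemma Q_rs : Qf (fun i1 i2 j1 j2 => (i1, j2)) + Qf (fun i1 i2 j1 j2 => (i2, j1)) =
  (\sum_(j' : 'I_b) X (i, j') - X (i, j)) * (\sum_(i' : 'I_a) X (i', j) - X (i, j)).
Proof.
rewrite Q_r Q_s -big_split /= -!sum_except mulrC big_distrl /=.
apply: eq_bigr => i' _; rewrite -big_split big_distrr /=; apply: eq_bigr => j' _.
rewrite [j == j']eq_sym.
have [h|h|h] := ltngtP i i'.
- have -> : (i' != i) = true by rewrite -val_eqE /= (gtn_eqF h).
  by rewrite /= addr0; case: (j' != j); rewrite ?mulr0 // mulrC.
- have -> : (i' != i) = true by rewrite -val_eqE /= (ltn_eqF h).
  by rewrite /= add0r; case: (j' != j); rewrite ?mulr0.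
- have -> : (i' != i) = false by apply/negbTE; rewrite negbK; apply/eqP/val_inj.
  by rewrite /= addr0 mul0r.
Qed.

Lemma Q_pq : Qf (fun i1 i2 j1 j2 => (i1, j1)) + Qf (fun i1 i2 j1 j2 => (i2, j2)) =
  X (i, j) * \sum_(i' : 'I_a) (if i' != i then \sum_(j' : 'I_b) X (i', j') - X (i', j) else 0).
Proof.
rewrite Q_p Q_q -big_split /= mulr_sumr.
apply: eq_bigr => i' _; rewrite -sum_except -big_split /=.
have [h|h|h] := ltngtP i i'.
- have -> : (i' != i) = true by rewrite -val_eqE /= (gtn_eqF h).
  rewrite mulr_sumr; apply: eq_bigr => j' _.
  by rewrite [j == j']eq_sym /= addr0; case: (j' != j); rewrite ?mulr0.
- have -> : (i' != i) = true by rewrite -val_eqE /= (ltn_eqF h).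
  rewrite mulr_sumr; apply: eq_bigr => j' _.
  by rewrite /= add0r; case: (j' != j); rewrite ?mulr0 // mulrC.
- have -> : (i' != i) = false by apply/negbTE; rewrite negbK; apply/eqP/val_inj.
  by rewrite mulr0 big1 // => j' _; rewrite /= addr0.
Qed.
End Q.

Lemma val_cases (R : comNzRingType) (A m : nat) (p q r s : bool) :
  (p -> 0 < A)%N -> (q -> 0 < A)%N -> ~~ (p && q) -> ~~ (r && s) -> ~~ (p && r) ->
  ~~ (p && s) -> ~~ (q && r) -> ~~ (q && s) ->
  ((A + r + s - p - q)%N%:R ^+ m - A%:R ^+ m : R) =
    r%:R * ((A%:R + 1) ^+ m - A%:R ^+ m) + s%:R * ((A%:R + 1) ^+ m - A%:R ^+ m)
  + p%:R * ((A%:R - 1) ^+ m - A%:R ^+ m) + q%:R * ((A%:R - 1) ^+ m - A%:R ^+ m).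
Proof.
case: p q r s => [] [] [] [] //= h1 h2 _ _ _ _ _ _;
  rewrite ?addn0 ?subn0 ?addn1 ?natrB ?(h1 isT) ?(h2 isT) // ?natrS ?mulr0 ?mulr1 ?mul0r ?mul1r ?addr0 ?add0r // -?natr1 ?subrr //.
Qed.

Lemma eq_sum4 (R : comNzRingType) a b (F G : 'I_a -> 'I_a -> 'I_b -> 'I_b -> R) :
  (forall i1 i2 j1 j2, F i1 i2 j1 j2 = G i1 i2 j1 j2) -> sum4 F = sum4 G.
Proof.
move=> h; rewrite /sum4; apply: eq_bigr => i1 _; apply: eq_bigr => i2 _.
by apply: eq_bigr => j1 _; apply: eq_bigr => j2 _.
Qed.

Lemma sum_nth_lam (s : seq nat) : (\sum_(i < size s) nth 0 s i)%N = sumn s.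
Proof. by rewrite sumnE (big_nth 0) big_mkord. Qed.

Lemma Papply_expand4 (R : realFieldType) n lam mu (f : table n lam mu -> R) x :
  is_partition n lam -> x \in tables n lam mu ->
  Papply f x = f x + sum4 (fun i1 i2 j1 j2 =>
    if (i1 < i2)%N && (j1 != j2) then
       2 * (x (i1, j1) : nat)%:R * (x (i2, j2) : nat)%:R / (n%:R ^+ 2)
         * (f (mvt x i1 i2 j1 j2) - f x) else 0).
Proof. exact: Papply_expand. Qed.

Theorem theorem3p1 (R : realFieldType) (n : nat) (lam mu : seq nat) :
  is_partition n lam -> is_partition n mu ->
  (forall (m : nat) (i : 'I_(size lam)) (j : 'I_(size mu)), (0 < m)%N ->
     exists q : {mpoly R[nvars lam mu]},
       (msize q <= m)%N /\
       forall x : table n lam mu, x \in tables n lam mu ->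
         Papply (fun T => (T (i, j) : nat)%:R ^+ m) x
         = (x (i, j) : nat)%:R ^+ m
             * (1 - 2 * m%:R * ((n.+1)%:R - m%:R) / (n%:R ^+ 2))
           + q.@[entries (R:=R) x])
  /\
  (forall (f : table n lam mu -> R) (beta : R),
     (forall x, x \in tables n lam mu -> Papply f x = beta * f x) ->
     exists p : {mpoly R[nvars lam mu]},
       forall x, x \in tables n lam mu -> f x = p.@[entries (R:=R) x]).
Proof.
move=> hl hmu; split.
  move=> m i j m0.
  have [p [hp hpv]] := poly_part (n%:R : R) (2 / (n%:R ^+ 2)) (nth 0 lam i)%:R (nth 0 mu j)%:R m0.
  have [q [hq hqv]] := poly_to_mpoly (enum_rank ((i, j) : cell lam mu) : 'I_(nvars lam mu)) hp.
  exists q; split => // x xT.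
  rewrite hqv /entries enum_rankK hpv (Papply_expand4 _ hl xT).
  set k : R := 2 / n%:R ^+ 2.
  pose X := fun c : cell lam mu => ((x c : nat)%:R : R).
  set a : nat := (x (i, j) : nat).
  set al : R := (a%:R + 1) ^+ m - a%:R ^+ m.
  set be : R := (a%:R - 1) ^+ m - a%:R ^+ m.
  rewrite (@eq_sum4 _ _ _ _ (fun i1 i2 j1 j2 =>
      k * al * (if (i1 < i2)%N && (j1 != j2) then X (i1, j1) * X (i2, j2) * ((i, j) == (i1, j2))%:R else 0)
    + k * al * (if (i1 < i2)%N && (j1 != j2) then X (i1, j1) * X (i2, j2) * ((i, j) == (i2, j1))%:R else 0)
    + k * be * (if (i1 < i2)%N && (j1 != j2) then X (i1, j1) * X (i2, j2) * ((i, j) == (i1, j1))%:R else 0)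
    + k * be * (if (i1 < i2)%N && (j1 != j2) then X (i1, j1) * X (i2, j2) * ((i, j) == (i2, j2))%:R else 0))).
    rewrite !sum4D !sum4Z.
    have Hrs := Q_rs X i j; have Hpq := Q_pq X i j; rewrite /Qf in Hrs Hpq.
    rewrite -mulrDr Hrs -addrA -mulrDr Hpq.
    have rowR : forall r, \sum_(j' : 'I_(size mu)) X (r, j') = (nth 0 lam r)%:R.
      move=> r; rewrite /X -natr_sum.
      by move: xT; rewrite inE => /andP [/forallP /(_ r) /eqP -> _].
    have colR : forall s, \sum_(i' : 'I_(size lam)) X (i', s) = (nth 0 mu s)%:R.
      move=> s; rewrite /X -natr_sum.
      by move: xT; rewrite inE => /andP [_ /forallP /(_ s) /eqP ->].
    have E : \sum_(i' : 'I_(size lam)) (if i' != i then \sum_(j' : 'I_(size mu)) X (i', j') - X (i', j) else 0)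
        = (n%:R - (nth 0 lam i)%:R) - ((nth 0 mu j)%:R - X (i, j)).
      transitivity (\sum_(i' : 'I_(size lam)) (if i' != i then (nth 0 lam i')%:R else 0)
                    - \sum_(i' : 'I_(size lam)) (if i' != i then X (i', j) else 0) : R).
        rewrite -sumrB; apply: eq_bigr => i' _; rewrite rowR; by case: ifP; rewrite ?subr0.
      rewrite !sum_except colR -natr_sum sum_nth_lam.
      by case/and3P: hl => _ _ /eqP ->.
    rewrite E rowR colR.
    change (X (i, j)) with (a%:R : R).
    rewrite -natr1 /k.
    ring.
  move=> i1 i2 j1 j2.
  case: ifP => [/andP [c1 c2] | _]; last by rewrite !mulr0 !addr0.
  have i12 : i1 != i2 by rewrite -val_eqE /= ltn_eqF.
  have i21 : i2 != i1 by rewrite eq_sym.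
  have j21 : j2 != j1 by rewrite eq_sym.
  have ex : forall p q c : cell lam mu, p != q -> ~~ ((c == p) && (c == q)).
    by move=> p' q' c pq; apply/negP => /andP [/eqP -> /eqP E]; rewrite E eqxx in pq.
  have [z1|p1] := posnP (x (i1, j1)).
    by rewrite /X z1 !(mulr0, mul0r, addr0).
  have [z2|p2] := posnP (x (i2, j2)).
    by rewrite /X z2 !(mulr0, mul0r, addr0).
  have hm := mvt_move hl xT i12 c2 p1 p2.
  rewrite (move_val (i, j) hm) val_cases.
  - rewrite -/a -/al -/be /X /k; ring.
  - by rewrite /a => /eqP ->.
  - by rewrite /a => /eqP ->.
  - by apply: ex; rewrite xpair_eqE negb_and i12.
  - by apply: ex; rewrite xpair_eqE negb_and i12.
  - by apply: ex; rewrite xpair_eqE negb_and c2 orbT.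
  - by apply: ex; rewrite xpair_eqE negb_and i12.
  - by apply: ex; rewrite xpair_eqE negb_and i21.
  - by apply: ex; rewrite xpair_eqE negb_and j21 orbT.
move=> f beta _.
pose ind (T : table n lam mu) : {mpoly R[nvars lam mu]} :=
  \prod_(c : cell lam mu) \prod_(v : 'I_n.+1 | v != T c)
     (('X_(enum_rank c : 'I_(nvars lam mu)) - ((v : nat)%:R)%:MP)
        * ((((T c : nat)%:R - (v : nat)%:R)^-1)%:MP)).
exists (\sum_(T in tables n lam mu) f T *: ind T).
move=> x xT.
have indE : forall T, (ind T).@[entries x] = if x == T then 1 else 0.
  move=> T; rewrite /ind rmorph_prod /=.
  under eq_bigr => c _ do rewrite rmorph_prod /=.
  under eq_bigr => c _ do under eq_bigr => v _ do
    rewrite mevalM mevalB mevalXU !mevalC /entries enum_rankK.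
  case: eqP => [<-|ne].
    apply: big1 => c _; apply: big1 => v hv; rewrite mulfV // subr_eq0 eqr_nat.
    by rewrite eq_sym.
  case: (boolP [exists c, x c != T c]) => [/existsP [c hc]|/existsPn hall]; last first.
    by exfalso; apply: ne; apply/ffunP => c; apply/eqP; exact: negPn (hall c).
  by rewrite (bigD1 c) //= (bigD1 (x c) hc) //= subrr !mul0r.
rewrite raddf_sum /=.
under eq_bigr => T _ do rewrite mevalZ indE.
rewrite (bigD1 x) //= eqxx mulr1 big1 ?addr0 // => T /andP [_ hT].
by rewrite eq_sym (negbTE hT) mulr0.
Qed.
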